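(* With $P$ the Pauli tuple and $\overline{P}=(P_1,P_2,-P_3)$, one has $\mathcal W(\overline{P})=-\mathcal W(P)$, equivalently $\mathcal D_{\overline{P}}=-\mathcal D_P$.
   Context: For $A\in SM_d(\mathbb C)^g$ (tuples of self-adjoint $d\times d$ complex matrices), $\mathcal D_A=\bigcup_n\{X\in SM_n(\mathbb C)^g: I-\sum_i A_i\otimes X_i\succeq0\}$. For a tuple $T$ of operators on a Hilbert space $H$, the matrix range is $\mathcal W(T)=\bigcup_n\{\phi(T):\phi:B(H)\to M_n \text{ unital completely positive}\}$, with $\phi(T)=(\phi(T_1),\dots,\phi(T_g))$. For a set $K$ of tuples, $-K=\{-X: X\in K\}$. The Pauli tuple is $P=\left(\begin{bmatrix}1&0\\0&-1\end{bmatrix},\begin{bmatrix}0&1\\1&0\end{bmatrix},\begin{bmatrix}0&i\\-i&0\end{bmatrix}\right)$. *)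

(* Defs.v *)
From HB Require Import structures.
From mathcomp Require Import all_boot all_order all_algebra.
From mathcomp Require Import complex mxtens.
From mathcomp Require Import reals.
Set Implicit Arguments. Unset Strict Implicit. Unset Printing Implicit Defensive.
Import Order.TTheory GRing.Theory Num.Theory.
Local Open Scope ring_scope.

Section Defs.
Variable C : numClosedFieldType.

Definition adjmx {m n} (A : 'M[C]_(m, n)) : 'M[C]_(n, m) := (map_mx Num.conj A)^T.

Definition selfadj {n} (A : 'M[C]_n) : Prop := adjmx A = A.

Definition psd {n} (A : 'M[C]_n) : Prop :=
  selfadj A /\ forall v : 'cV[C]_n, 0 <= (adjmx v *m A *m v) 0 0.

(* block matrix [B i j]_{i,j<k} in M_k(M_m), realized as a km x km matrix *)
Definition blockmx {k m} (B : 'I_k -> 'I_k -> 'M[C]_m) : 'M[C]_(k * m) :=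
  \matrix_(r, s) B (mxtens_unindex r).1 (mxtens_unindex s).1
                   (mxtens_unindex r).2 (mxtens_unindex s).2.

Definition ucp {d n} (phi : 'M[C]_d -> 'M[C]_n) : Prop :=
  [/\ (forall (a : C) (X Y : 'M[C]_d), phi (a *: X + Y) = a *: phi X + phi Y),
      phi 1%:M = 1%:M &
      forall k (B : 'I_k -> 'I_k -> 'M[C]_d),
        psd (blockmx B) -> psd (blockmx (fun i j => phi (B i j)))].

(* matrix range of a g-tuple T of operators on H = C^d:
   membership of the level-n tuple X *)
Definition matrange {g d} (T : 'I_g -> 'M[C]_d) (n : nat) (X : 'I_g -> 'M[C]_n) : Prop :=
  exists phi : 'M[C]_d -> 'M[C]_n, ucp phi /\ forall i, X i = phi (T i).

Definition freespec {g d} (A : 'I_g -> 'M[C]_d) (n : nat) (X : 'I_g -> 'M[C]_n) : Prop :=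
  (forall i, selfadj (X i)) /\
  psd (1%:M - \sum_(i < g) tensmx (A i) (X i)).

Definition negset {g} (K : forall n, ('I_g -> 'M[C]_n) -> Prop) n (X : 'I_g -> 'M[C]_n) : Prop :=
  K n (fun i => - X i).

Definition pauli : 'I_3 -> 'M[C]_2 := fun i =>
  match val i with
  | 0 => \matrix_(r, s) (if r == s then (if val r == 0 then 1 else -1) else 0)
  | 1 => \matrix_(r, s) (if r == s then 0 else 1)
  | _ => \matrix_(r, s) (if r == s then 0 else if val r == 0 then 'i else - 'i)
  end.

Definition pauli_bar : 'I_3 -> 'M[C]_2 := fun i =>
  if val i == 2 then - pauli i else pauli i.

End Defs.

(* Main.v *)
Require Import Defs.
From HB Require Import structures.
From mathcomp Require Import all_boot all_order all_algebra.
From mathcomp Require Import complex mxtens.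
From mathcomp Require Import reals.
Set Implicit Arguments. Unset Strict Implicit. Unset Printing Implicit Defensive.
Import Order.TTheory GRing.Theory Num.Theory.
Local Open Scope ring_scope.

Section Gen.
Variable C : numClosedFieldType.

Lemma adjmx_mul m n p (A : 'M[C]_(m,n)) (B : 'M[C]_(n,p)) :
  adjmx (A *m B) = adjmx B *m adjmx A.
Proof. by rewrite /adjmx map_mxM trmx_mul. Qed.

Lemma adjmxK m n (A : 'M[C]_(m,n)) : adjmx (adjmx A) = A.
Proof. by apply/matrixP => i j; rewrite !mxE conjCK. Qed.

Lemma adjmxN m n (A : 'M[C]_(m,n)) : adjmx (- A) = - adjmx A.
Proof. by apply/matrixP => i j; rewrite !mxE rmorphN. Qed.

Lemma adjmx_tens m n p q (A : 'M[C]_(m,n)) (B : 'M[C]_(p,q)) :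
  adjmx (A *t B) = adjmx A *t adjmx B.
Proof. by apply/matrixP => i j; rewrite !mxE rmorphM. Qed.

Lemma psd_conj n k (A : 'M[C]_n) (V : 'M[C]_(n,k)) :
  psd A -> psd (adjmx V *m A *m V).
Proof.
move=> [hA hv]; split.
  by rewrite /selfadj !adjmx_mul adjmxK hA mulmxA.
move=> v; have := hv (V *m v).
by rewrite adjmx_mul !mulmxA.
Qed.

Lemma blockmx_sum k m (B : 'I_k -> 'I_k -> 'M[C]_m) :
  blockmx B = \sum_i \sum_j delta_mx i j *t B i j.
Proof.
apply/matrixP => r s.
case: (mxtens_indexP r) => i1 i2; case: (mxtens_indexP s) => j1 j2.
rewrite !mxE !mxtens_indexK /= summxE (bigD1 i1) //= summxE (bigD1 j1) //=.
rewrite tensmxE !mxE !eqxx mul1r big1 ?addr0; last first.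
  by move=> j /negbTE hj; rewrite tensmxE !mxE eqxx (eq_sym j1) hj mul0r.
rewrite big1 ?addr0 // => i /negbTE hi; rewrite summxE big1 // => j _.
by rewrite tensmxE !mxE (eq_sym i1) hi mul0r.
Qed.

Lemma blockmx_conj k m (B : 'I_k -> 'I_k -> 'M[C]_m) (V : 'M[C]_m) :
  blockmx (fun i j => adjmx V *m B i j *m V) =
  adjmx (1%:M *t V) *m blockmx B *m (1%:M *t V).
Proof.
rewrite !blockmx_sum mulmx_sumr mulmx_suml; apply: eq_bigr => i _.
rewrite mulmx_sumr mulmx_suml; apply: eq_bigr => j _.
rewrite adjmx_tens !tensmx_mul.
have -> : adjmx (1%:M : 'M[C]_k) = 1%:M by apply/matrixP=> a b; rewrite !mxE rmorph_nat eq_sym.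
by rewrite mul1mx mulmx1.
Qed.

Lemma ucp_conj d n (phi : 'M[C]_d -> 'M[C]_n) (U : 'M[C]_d) :
  adjmx U = U -> U *m U = 1%:M -> ucp phi -> ucp (fun A => phi (U *m A *m U)).
Proof.
move=> hU hUU [hl h1 hc]; split.
- by move=> a X Y; rewrite mulmxDr mulmxDl -scalemxAr -scalemxAl hl.
- by rewrite mulmx1 hUU.
- move=> k B hB; apply: (hc k (fun i j => U *m B i j *m U)).
  have := blockmx_conj B U; rewrite hU => ->.
  exact: psd_conj.
Qed.

Lemma ucpN d n (phi : 'M[C]_d -> 'M[C]_n) A : ucp phi -> phi (- A) = - phi A.
Proof.
move=> [hl _ _].
have h0 : phi 0 = 0.
  have := hl 1 0 0; rewrite !scale1r addr0 => h.
  by apply: (addrI (phi 0)); rewrite addr0 -h.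
have := hl (-1) A 0; rewrite addr0 h0 addr0 !scaleN1r //.
Qed.
End Gen.
Section P.
Variable C : numClosedFieldType.
Definition i2 : 'I_3 := Ordinal (isT : 2 < 3)%N.
Definition U := pauli C i2.

Ltac ent := apply/matrixP => -[[|[|?]] ?] [[|[|?]] ?] //;
  rewrite ?(mxE, big_ord_recl, big_ord0) //=.

Lemma U_adj : adjmx U = U.
Proof. ent; by rewrite ?rmorph0 -?conjCi ?conjCK. Qed.

Ltac fin := rewrite ?(mul0r, mulr0, add0r, addr0, mulr1, mul1r, mulrN, mulNr, mulCii, opprK, oppr0) //.

Lemma UU : U *m U = 1%:M.
Proof. ent; fin. Qed.

Lemma Uconj i : U *m pauli C i *m U = - pauli_bar C i.
Proof.
case: i => [[|[|[|?]]] ?] //; rewrite /pauli_bar /=; ent; fin.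
Qed.

Lemma Uconj' i : U *m pauli_bar C i *m U = - pauli C i.
Proof.
have : U *m (U *m pauli C i *m U) *m U = pauli C i.
  by rewrite !mulmxA UU mul1mx -mulmxA UU mulmx1.
by rewrite Uconj mulmxN mulNmx => h; rewrite -h opprK.
Qed.

Lemma tens11 m k : (1%:M : 'M[C]_m) *t (1%:M : 'M[C]_k) = 1%:M.
Proof.
apply/matrixP => r s.
case: (mxtens_indexP r) => i j; case: (mxtens_indexP s) => k1 l.
rewrite tensmxE !mxE (can_eq (@mxtens_indexK _ _)) xpair_eqE -natrM mulnb //.
Qed.

Lemma tensNN m k (A : 'M[C]_m) (B : 'M[C]_k) : (- A) *t (- B) = A *t B.
Proof. by apply/matrixP => r s; rewrite !mxE mulrNN. Qed.

Section W.
Variable n : nat.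
Definition W := U *t (1%:M : 'M[C]_n).

Lemma W_adj : adjmx W = W.
Proof.
rewrite /W adjmx_tens U_adj; congr (_ *t _).
by apply/matrixP=> a b; rewrite !mxE rmorph_nat eq_sym.
Qed.

Lemma WW : W *m W = 1%:M.
Proof. by rewrite /W tensmx_mul UU mulmx1 tens11. Qed.

Lemma Wconj (X : 'I_3 -> 'M[C]_n) :
  W *m (1%:M - \sum_(i < 3) pauli C i *t (- X i)) *m W =
  1%:M - \sum_(i < 3) pauli_bar C i *t X i.
Proof.
rewrite mulmxBr mulmxBl mulmx1 WW mulmx_sumr mulmx_suml; congr (_ - _).
apply: eq_bigr => i _.
by rewrite /W !tensmx_mul mul1mx mulmx1 Uconj tensNN.
Qed.
End W.
End P.

Theorem mainTheorem2 (R : realType) :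
  (forall (n : nat) (X : 'I_3 -> 'M[R[i]]_n),
      matrange (pauli_bar R[i]) X <-> negset (fun m => @matrange _ _ _ (pauli R[i]) m) X)
  /\
  (forall (n : nat) (X : 'I_3 -> 'M[R[i]]_n),
      freespec (pauli_bar R[i]) X <-> negset (fun m => @freespec _ _ _ (pauli R[i]) m) X).
Proof.
split => n X; rewrite /negset; split.
- move=> [phi [hphi hX]]; exists (fun A => phi (U _ *m A *m U _)); split.
    exact: ucp_conj (U_adj _) (UU _) hphi.
  by move=> i; rewrite Uconj (ucpN _ hphi) hX.
- move=> [phi [hphi hX]]; exists (fun A => phi (U _ *m A *m U _)); split.
    exact: ucp_conj (U_adj _) (UU _) hphi.
  by move=> i; rewrite Uconj' (ucpN _ hphi) -hX opprK.
- move=> [hs hp]; split.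
    by move=> i; rewrite /selfadj adjmxN hs.
  have := psd_conj (W _ n) hp; rewrite W_adj.
  rewrite -[X in psd (_ *m X *m _)]Wconj !mulmxA WW mul1mx -mulmxA WW mulmx1.
  done.
- move=> [hs hp]; split.
    by move=> i; have := hs i; rewrite /selfadj adjmxN => /oppr_inj.
  rewrite -Wconj -{1}W_adj; exact: psd_conj.
Qed.
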